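(* Let $n,p>1$ and $q\geq 1$ be integers. A magic column rectangle $MCR(n^{(p)};q)$ exists if and only if $n$ is even or all three of $n,p,q$ are odd.
   Context: A magic column rectangle $MCR(n^{(p)};q)$ is an $np\times q$ matrix whose entries are $1,2,\ldots,npq$, each appearing exactly once, which is partitioned into $pq$ blocks of size $n\times 1$ (each column is split into $p$ consecutive segments of $n$ entries) such that the sum of the entries in every block is the same constant (necessarily $\frac{n(npq+1)}{2}$). *)

(* Defs.v *)
From mathcomp Require Import all_boot all_order all_algebra.
Set Implicit Arguments. Unset Strict Implicit. Unset Printing Implicit Defensive.

Lemma seg_row_lt (n p : nat) (s : 'I_p) (r : 'I_n) : s * n + r < n * p.
Proof.
case: s r => s hs [r hr] /=.
apply: (@leq_trans (s * n + n)); first by rewrite ltn_add2l.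
by rewrite addnC -mulSn mulnC leq_mul2l hs orbT.
Qed.

Definition seg_row (n p : nat) (s : 'I_p) (r : 'I_n) : 'I_(n * p) :=
  Ordinal (seg_row_lt s r).

Definition is_MCR (n p q : nat) (A : 'M[nat]_(n * p, q)) : Prop :=
  (forall k, 1 <= k <= n * p * q ->
     exists! ij : 'I_(n * p) * 'I_q, A ij.1 ij.2 = k) /\
  (forall i j, 1 <= A i j <= n * p * q) /\
  exists c : nat, forall (s : 'I_p) (j : 'I_q),
    \sum_(r < n) A (seg_row s r) j = c.

Definition MCR_exists (n p q : nat) : Prop :=
  exists A : 'M[nat]_(n * p, q), is_MCR A.

(* Main.v *)
Require Import Defs.
From mathcomp Require Import all_boot all_order all_algebra.
From mathcomp Require Import zify.

Lemma divmod_inj (d a b a' b' : nat) : b < d -> b' < d ->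
  a * d + b = a' * d + b' -> a = a' /\ b = b'.
Proof.
move=> hb hb' e.
have d0 : 0 < d by lia.
have e1 := congr1 (fun x => x %/ d) e; have e2 := congr1 (fun x => x %% d) e.
move: e1 e2 => /=; rewrite !divnMDl // !modnMDl !divn_small // !modn_small //.
by rewrite !addn0 => -> ->.
Qed.

Arguments divmod_inj {d a b a' b'}.

Lemma generic (n p q : nat) (w : nat -> nat -> nat) (C : nat) :
  0 < n -> 0 < p -> 0 < q ->
  (forall r k, r < n -> k < p * q -> w r k < p * q) ->
  (forall r k k', r < n -> k < p * q -> k' < p * q -> w r k = w r k' -> k = k') ->
  (forall k, k < p * q -> \sum_(0 <= r < n) w r k = C) ->
  MCR_exists n p q.
Proof.
move=> n0 p0 q0 H1 H2 H3.
set m := p * q.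
have m0 : 0 < m by rewrite /m muln_gt0 p0.
have kb : forall (i : 'I_(n * p)) (j : 'I_q), i %/ n + p * j < m.
  move=> i j; have hi : i %/ n < p by rewrite ltn_divLR //; apply: leq_trans (ltn_ord _) _; rewrite mulnC.
  have hj := ltn_ord j.
  apply: (@leq_trans (p + p * j)); first by rewrite ltn_add2r.
  by rewrite /m -mulnS leq_mul2l hj orbT.
pose v (i : 'I_(n * p)) (j : 'I_q) := (i %% n) * m + w (i %% n) (i %/ n + p * j).
have vb : forall i j, v i j < n * p * q.
  move=> i j; rewrite /v -mulnA -/m.
  have hr : i %% n < n by rewrite ltn_mod.
  have := H1 _ _ hr (kb i j).
  move: (w _ _) => x hx.
  apply: (@leq_trans ((i %% n).+1 * m)); first by rewrite mulSn addnC ltn_add2r.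
  by rewrite leq_mul2r hr orbT.
pose F (x : 'I_(n * p) * 'I_q) : 'I_(n * p * q) := Ordinal (vb x.1 x.2).
have Finj : injective F.
  move=> [i j] [i' j'] /(congr1 val) /=; rewrite /v.
  have hr : i %% n < n by rewrite ltn_mod.
  have hr' : i' %% n < n by rewrite ltn_mod.
  move/(divmod_inj (H1 _ _ hr (kb i j)) (H1 _ _ hr' (kb i' j'))) => [er ew].
  rewrite -er in ew; move/(H2 _ _ _ hr (kb i j) (kb i' j')): ew.
  have hi : i %/ n < p by rewrite ltn_divLR //; apply: leq_trans (ltn_ord _) _; rewrite mulnC.
  have hi' : i' %/ n < p by rewrite ltn_divLR //; apply: leq_trans (ltn_ord _) _; rewrite mulnC.
  move=> e; have : (j : nat) * p + i %/ n = j' * p + i' %/ n by lia.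
  move/(divmod_inj hi hi') => [ej es].
  have ei : (i : nat) = i'.
    by rewrite (divn_eq i n) (divn_eq i' n) es er.
  by congr pair; apply: val_inj.
have Fbij : bijective F.
  apply: (inj_card_bij Finj); by rewrite card_prod !card_ord.
exists (\matrix_(i < n * p, j < q) (v i j).+1)%R.
split; [|split].
- move=> k /andP [k1 kN].
  have kN' : k.-1 < n * p * q by lia.
  case: Fbij => G FG GF.
  exists (G (Ordinal kN')); split.
    rewrite mxE.
    have := GF (Ordinal kN') => /(congr1 val) /= ->; lia.
  move=> [i j]; rewrite mxE /= => e.
  apply: (Finj); rewrite GF; apply: val_inj => /=; lia.
- move=> i j; rewrite mxE; have := vb i j; lia.
exists (\sum_(0 <= r < n) r * m + C + n) => s j.
have hs := ltn_ord s.
have -> : \sum_(r < n) (\matrix_(i < n * p, j < q) (v i j).+1)%R (seg_row s r) j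
   = \sum_(0 <= r < n) (r * m + w r (s + p * j) + 1).
  rewrite big_mkord; apply: eq_bigr => r _; rewrite mxE /v /=.
  rewrite modnMDl modn_small // divnMDl // divn_small // addn0; lia.
rewrite !big_split /= H3; last first.
  have hj := ltn_ord j.
  apply: (@leq_trans (p + p * j)); first by rewrite ltn_add2r.
  by rewrite /m -mulnS leq_mul2l hj orbT.
congr (_ + _ + _).
by rewrite sum_nat_const_nat subn0 muln1.
Qed.

Definition g (m r k : nat) := if odd r then m - 1 - k else k.

Lemma sum_g {m} s {k} : k < m -> \sum_(0 <= r < s.*2) g m r k = s * (m - 1).
Proof.
move=> km; elim: s => [|s IH]; first by rewrite big_geq.
rewrite doubleS !big_nat_recr //= IH /g /= odd_double /=; lia.
Qed.

Definition sig (h k : nat) := if k <= h then k + h else k - h - 1.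

Definition wodd (m r k : nat) :=
  match r with
  | 0 => k
  | 1 => sig m./2 k
  | 2 => 3 * m./2 - k - sig m./2 k
  | r'.+3 => g m r' k
  end.

Lemma sum_wodd {m} s {k} : k < m -> odd m ->
  \sum_(0 <= r < (s.*2).+3) wodd m r k = 3 * m./2 + s * (m - 1).
Proof.
move=> km om.
rewrite !big_nat_recl // sum_g //= /sig.
have := odd_double_half m; rewrite om.
case: ifP => H; lia.
Qed.
Lemma gauss N : 2 * \sum_(y < N) y.+1 = N * N.+1.
Proof.
elim: N => [|N IH]; first by rewrite big_ord0.
rewrite big_ord_recr /= mulnDr IH; lia.
Qed.

Lemma seg_sum n p (F : 'I_(n * p) -> nat) :
  \sum_(i < n * p) F i = \sum_(s < p) \sum_(r < n) F (seg_row s r).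
Proof.
rewrite pair_bigA /=.
pose h (x : 'I_p * 'I_n) := seg_row x.1 x.2.
have hinj : injective h.
  move=> [s r] [s' r'] /(congr1 val) /=.
  move/(divmod_inj (ltn_ord r) (ltn_ord r')) => [e1 e2].
  by congr pair; apply: val_inj.
have hbij : bijective h.
  apply: (inj_card_bij hinj); by rewrite card_prod !card_ord mulnC.
by rewrite (reindex h (onW_bij _ hbij)).
Qed.

Lemma necessity n p q : 0 < n -> 0 < p -> 0 < q -> MCR_exists n p q ->
  ~~ odd n \/ (odd n /\ odd p /\ odd q).
Proof.
move=> n0 p0 q0 [A [Hu [Hr [c Hc]]]].
set N := n * p * q.
have Fb : forall x : 'I_(n * p) * 'I_q, (A x.1 x.2).-1 < N.
  move=> x; have := Hr x.1 x.2; rewrite -/N; lia.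
pose F x : 'I_N := Ordinal (Fb x).
have Finj : injective F.
  move=> x y /(congr1 val) /= e.
  have hx := Hr x.1 x.2; have hy := Hr y.1 y.2.
  have e' : A x.1 x.2 = A y.1 y.2 by lia.
  have [z [_ Hz]] := Hu (A x.1 x.2) hx.
  have <- := Hz x erefl; exact: Hz y (esym e').
have Fbij : bijective F.
  apply: (inj_card_bij Finj); by rewrite card_prod !card_ord.
have S1 : \sum_(x : 'I_(n * p) * 'I_q) A x.1 x.2 = \sum_(y < N) y.+1.
  rewrite (reindex F (onW_bij _ Fbij)); apply: eq_bigr => x _ /=.
  by case/andP: (Hr x.1 x.2); case: (A x.1 x.2).
have S2 : \sum_(x : 'I_(n * p) * 'I_q) A x.1 x.2 = q * (p * c).
  rewrite -pair_bigA /= exchange_big /=.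
  rewrite (eq_bigr (fun _ => p * c)); first by rewrite sum_nat_const card_ord.
  move=> j _; rewrite seg_sum (eq_bigr (fun _ => c)); first by rewrite sum_nat_const card_ord.
  by move=> s _; rewrite Hc.
have G := gauss N.
rewrite -S1 S2 in G.
have E : c.*2 = n * N.+1.
  have pq0 : 0 < p * q by rewrite muln_gt0 p0.
  apply/eqP; rewrite -(eqn_pmul2l pq0).
  apply/eqP; move: G; rewrite /N; nia.
case On: (odd n); [right|left] => //.
have := congr1 odd E; rewrite odd_double oddM On /= /N !oddM On /=.
by case: (odd p); case: (odd q).
Qed.

Theorem theorem9 (n p q : nat) (hn : 1 < n) (hp : 1 < p) (hq : 1 <= q) :
  MCR_exists n p q <-> (~~ odd n \/ (odd n /\ odd p /\ odd q)).
Proof.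
split; first by apply: necessity; lia.
have n0 : 0 < n by lia.
have p0 : 0 < p by lia.
case => [ev | [on [op oq]]].
- apply: (@generic n p q (g (p * q)) (n./2 * (p * q - 1))) => //.
  + by move=> r k _ km; rewrite /g; case: (odd r); lia.
  + by move=> r k k' _ km km'; rewrite /g; case: (odd r); lia.
  + move=> k km; have := sum_g (n./2) km.
    by have := odd_double_half n; rewrite (negbTE ev) add0n => ->.
- set m := p * q.
  have om : odd m by rewrite oddM op oq.
  have hm := odd_double_half m; rewrite om in hm.
  apply: (@generic n p q (wodd m) (3 * m./2 + ((n - 3)./2) * (m - 1))) => //.
  + move=> r k _ km; rewrite -/m.
    case: r => [|[|[|r]]] /=; rewrite /sig /g; try case: ifP; try case: (odd r); lia.
  + move=> r k k' _ km km'; rewrite -/m.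
    case: r => [|[|[|r]]] /=; rewrite /sig /g; try case: ifP; try case: ifP; try case: (odd r); lia.
  + move=> k km.
    have en := odd_double_half n; rewrite on in en.
    have e3 : (n - 3)./2 = n./2 - 1.
      have -> : n - 3 = (n./2 - 1).*2 by lia.
      by rewrite doubleK.
    have e4 : n = ((n./2 - 1).*2).+3 by lia.
    rewrite e3; have := sum_wodd (n./2 - 1) km om.
    by rewrite -e4.
Qed.
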